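(* Let $N=\{1,\dots,n\}$ with $n\ge 2$ and $\mathcal{D}=\mathbb{R}^n_+$. A rule $R:\mathcal{D}\to\mathbb{R}^n_+$ satisfies scale invariance, downstream impartiality, upstream invariance, and equal treatment of equal upstream total inflow if and only if it is a partial compromise rule, i.e. there exists $\delta\in[0,1]$ such that for each $e\in\mathcal{D}$, $R(e)=\delta R^{NT}(e)+(1-\delta)R^{EPT}(e)$.
   Context: Agents $1,\dots,n$ are located along a linear river, lower index meaning more upstream; agent $i$ has river inflow $e_i\ge 0$, and $e=(e_1,\dots,e_n)\in\mathcal{D}=\mathbb{R}^n_+$. An allocation for $e$ is $x\in\mathbb{R}^n_+$ with $\sum_{i=1}^n x_i=\sum_{i=1}^n e_i$ and $\sum_{i=1}^k x_i\le\sum_{i=1}^k e_i$ for each $k=1,\dots,n-1$. A rule is a map $R:\mathcal{D}\to\mathbb{R}^n_+$ assigning to each $e$ an allocation $R(e)$ for $e$. No-transfer rule: $R^{NT}_i(e)=e_i$ for all $i$. Egalitarian partial-transfer rule: $R^{EPT}_i(e)=\left[1-\frac{n-i}{n-1}\right]e_i+\frac{1}{n-1}\sum_{k<i}e_k$ for all $i\in N$. Axioms: Scale invariance: for each $e\in\mathcal{D}$ and each $\gamma\in\mathbb{R}_+$, $R(\gamma e)=\gamma R(e)$. Upstream invariance: for each $e,e'\in\mathcal{D}$ such that $e_i<e'_i$ for some $i\in N$ and $e_j=e'_j$ for all $j\ne i$, we have $R_k(e)=R_k(e')$ for each $k<i$. Downstream impartiality: for each $e,e'\in\mathcal{D}$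 such that $e_i<e'_i$ for some $i\in N$ and $e_j=e'_j$ for all $j\ne i$, and for each $k,l>i$ with $e_k=e_l$, we have $R_k(e')-R_k(e)=R_l(e')-R_l(e)$. Equal treatment of equal upstream total inflow: for each $e,e'\in\mathcal{D}$ and each $i\in N$, if $e_i=e'_i$ and $\sum_{j<i}e_j=\sum_{j<i}e'_j$, then $R_i(e)=R_i(e')$. *)

(* Defs.v *)
(* Agents are indexed by 'I_n = {0,...,n-1}; agent i : 'I_n
   corresponds to agent i+1 of the paper. Reals: an arbitrary R : realType. *)
From HB Require Import structures.
From mathcomp Require Import all_boot all_order all_algebra.
From mathcomp Require Import all_reals.
Set Implicit Arguments. Unset Strict Implicit. Unset Printing Implicit Defensive.
Import Order.TTheory GRing.Theory Num.Theory.
Local Open Scope ring_scope.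

Section River.
Variables (R : realType) (n : nat).

Definition profile := 'I_n -> R.

Definition inD (e : profile) : Prop := forall i, 0 <= e i.

Definition allocation (e x : profile) : Prop :=
  (forall i, 0 <= x i) /\
  \sum_(i < n) x i = \sum_(i < n) e i /\
  (forall k : nat, (k.+1 <= n.-1)%N ->
     \sum_(i < n | (i < k.+1)%N) x i <= \sum_(i < n | (i < k.+1)%N) e i).

Definition is_rule (F : profile -> profile) : Prop :=
  forall e, inD e -> allocation e (F e).

Definition R_NT (e : profile) : profile := fun i => e i.

Definition R_EPT (e : profile) : profile := fun i =>
  (1 - ((n - (i.+1))%N%:R / (n.-1)%:R)) * e i
  + (n.-1)%:R^-1 * \sum_(k < n | (k < i)%N) e k.

Definition scale_invariance (F : profile -> profile) : Prop :=
  forall e, inD e -> forall g : R, 0 <= g ->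
    F (fun j => g * e j) = (fun j => g * F e j).

Definition incr_at (e e' : profile) (i : 'I_n) : Prop :=
  e i < e' i /\ forall j, j != i -> e j = e' j.

Definition upstream_invariance (F : profile -> profile) : Prop :=
  forall e e', inD e -> inD e' -> forall i, incr_at e e' i ->
    forall k : 'I_n, (k < i)%N -> F e k = F e' k.

Definition downstream_impartiality (F : profile -> profile) : Prop :=
  forall e e', inD e -> inD e' -> forall i, incr_at e e' i ->
    forall k l : 'I_n, (i < k)%N -> (i < l)%N -> e k = e l ->
      F e' k - F e k = F e' l - F e l.

Definition equal_treatment_upstream (F : profile -> profile) : Prop :=
  forall e e', inD e -> inD e' -> forall i : 'I_n,
    e i = e' i ->
    \sum_(j < n | (j < i)%N) e j = \sum_(j < n | (j < i)%N) e' j ->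
    F e i = F e' i.

Definition partial_compromise (F : profile -> profile) : Prop :=
  exists delta : R, 0 <= delta <= 1 /\
    forall e, inD e -> forall i,
      F e i = delta * R_NT e i + (1 - delta) * R_EPT e i.

End River.

(* Main.v *)
Require Import Defs.
From mathcomp Require Import all_boot all_order all_algebra all_reals.
From mathcomp Require Import ring lra zify.
Import Order.TTheory GRing.Theory Num.Theory.
Local Open Scope ring_scope.

Section Main.
Variables (R : realType) (n : nat).
Implicit Types (e : profile R n).

Definition S e (k : nat) := \sum_(j < n | (j < k)%N) e j.

Lemma count_gt (k N : nat) :
  \sum_(0 <= i < N | (k < i)%N) (1 : R) = (N - k.+1)%:R.
Proof.
elim: N => [|N IH]; first by rewrite big_geq.
rewrite big_mkcond big_nat_recr //= -big_mkcond IH.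
case: ltnP => kN; rewrite ?addr0 ?natr1 /=.
  by congr (_%:R); lia.
by congr (_%:R); lia.
Qed.

Lemma count_gt_ord (k : nat) (c : R) :
  \sum_(j < n | (k < j)%N) c = (n - k.+1)%:R * c.
Proof.
rewrite -big_mkord.
have -> : \sum_(0 <= i < n | (k < i)%N) c = (\sum_(0 <= i < n | (k < i)%N) (1:R)) * c.
  by rewrite mulr_suml; apply: eq_bigr => *; rewrite mul1r.
by rewrite count_gt.
Qed.


Variable F : profile R n -> profile R n.
Hypothesis n_gt0 : (0 < n)%N.
Hypothesis rule : is_rule F.
Hypothesis SI : scale_invariance F.
Hypothesis ET : equal_treatment_upstream F.

Let i0 : 'I_n := Ordinal n_gt0.
Definition unit0 : profile R n := fun j => if val j == 0%N then 1 else 0.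
Definition cc (j : 'I_n) := F unit0 j.
Definition zerok e (k : 'I_n) : profile R n := fun j => if j == k then 0 else e j.

Lemma unit0_inD : inD unit0.
Proof. by move=> j; rewrite /unit0; case: ifP. Qed.

Lemma F0 (j : 'I_n) : F (fun _ => 0) j = 0.
Proof.
have H := SI (fun _ : 'I_n => 0) (fun _ => lexx 0) 0 (lexx 0).
have E : (fun j : 'I_n => 0 * (0:R)) = (fun _ => 0) by apply: boolp.funext => ?; rewrite mul0r.
rewrite E in H.
by have := congr1 (fun f => f j) H => /= ->; rewrite mul0r.
Qed.

Lemma S0 e : S e 0 = 0.
Proof. by rewrite /S big1. Qed.

Lemma sum_unit0 (k : 'I_n) : (0 < k)%N -> S unit0 k = 1.
Proof.
move=> k0; rewrite /S (bigD1 i0) //= big1 ?addr0 /unit0 //=.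
move=> j /andP[_ ji0]; case: ifP => // /eqP j0.
by case/eqP: ji0; apply: val_inj.
Qed.

Lemma F_zero e (k : 'I_n) : inD e -> e k = 0 -> F e k = cc k * S e k.
Proof.
move=> De ek.
have Sge : 0 <= S e k by apply: sumr_ge0 => *; apply: De.
have Du : inD (fun j => S e k * unit0 j).
  by move=> j; apply: mulr_ge0 => //; apply: unit0_inD.
rewrite (ET _ _ De Du k).
- have := congr1 (fun f => f k) (SI _ unit0_inD _ Sge) => /= ->.
  by rewrite mulrC.
- rewrite ek /unit0; case: eqP => [k0|]; last by rewrite mulr0.
  by rewrite mulr1 /S big1 // => j; rewrite k0.
- rewrite -mulr_sumr; have [k0|k0] := posnP k.
    by rewrite -/(S e k) /S k0 !big1 ?mulr0.
  by rewrite -/(S unit0 k) sum_unit0 // mulr1.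
Qed.

Lemma zerok_inD e k : inD e -> inD (zerok e k).
Proof. by move=> De j; rewrite /zerok; case: eqP. Qed.

Lemma zerok_ne e k j : j != k -> zerok e k j = e j.
Proof. by rewrite /zerok => /negbTE ->. Qed.

Lemma S_zerok_le e (k : 'I_n) (j : nat) : (j <= k)%N -> S (zerok e k) j = S e j.
Proof.
move=> jk; apply: eq_bigr => i ij; rewrite zerok_ne //.
by apply/eqP => ik; move: ij; rewrite ik ltnNge jk.
Qed.

Lemma S_zerok_gt e (k : 'I_n) (j : nat) : (k < j)%N -> S e j = S (zerok e k) j + e k.
Proof.
move=> kj; rewrite /S (bigD1 k) //= [in RHS](bigD1 k) //= /zerok eqxx add0r addrC.
by congr (_ + _); apply: eq_bigr => i /andP[_ ik]; rewrite (negbTE ik).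
Qed.

Lemma formula_aux d (k : 'I_n) : (n <= k + d)%N -> forall e, inD e ->
  F e k = (1 - \sum_(j < n | (k < j)%N) cc j) * e k + cc k * S e k.
Proof.
elim: d k => [|d IH] k; first by rewrite addn0 leqNgt ltn_ord.
move=> hk e De.
have De'' := @zerok_inD e k De.
have B := (rule _ De).2.1; have B'' := (rule _ De'').2.1.
have Ee : \sum_(j < n) e j - \sum_(j < n) zerok e k j = e k.
  rewrite (bigD1 k) //= [X in _ - X](bigD1 k) //=.
    have -> : zerok e k k = 0 by rewrite /zerok eqxx.
  rewrite add0r [X in _ - X](eq_bigr (fun j => e j)) ?addrK // => j jk.
  by rewrite zerok_ne.
have Fk'' : F (zerok e k) k = cc k * S e k.
  by rewrite F_zero // ?S_zerok_le // /zerok eqxx.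
have Rest : \sum_(j < n | j != k) (F e j - F (zerok e k) j)
          = \sum_(j < n | (k < j)%N) cc j * e k.
  rewrite big_mkcond [RHS]big_mkcond; apply: eq_bigr => j _.
  case: (ltngtP k j) => [kj|jk|kj].
  - have jnk : j != k by apply/eqP => jk; move: kj; rewrite jk ltnn.
    rewrite jnk.
    have hj : (n <= j + d)%N by move: hk kj; clear; lia.
    rewrite (IH j hj e De) (IH j hj _ De'') zerok_ne // (@S_zerok_gt e k j kj).
    ring.
  - have jnk : j != k by apply/eqP => jk'; move: jk; rewrite jk' ltnn.
    rewrite jnk (ET _ _ De De'' j) ?subrr //.
      by rewrite zerok_ne.
    by rewrite -/(S e j) -/(S (zerok e k) j) S_zerok_le // ltnW.
  - have -> : j = k by apply: val_inj.
    by rewrite eqxx.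
have := Ee; rewrite -B -B'' -sumrB (bigD1 k) //= Rest Fk'' -mulr_suml.
move=> H.
have -> : F e k = e k - (\sum_(i < n | (k < i)%N) cc i) * e k + cc k * S e k.
  move: H; set A := \sum_(i < n | (k < i)%N) cc i; move: (F e k) (e k) => x y H.
  by rewrite -{1}H; ring.
ring.
Qed.

Lemma formula (k : 'I_n) e : inD e ->
  F e k = (1 - \sum_(j < n | (k < j)%N) cc j) * e k + cc k * S e k.
Proof. by apply: (@formula_aux n) ; rewrite leq_addl. Qed.


End Main.

Section Back.
Variables (R : realType) (n : nat).

Lemma S_incr (e e' : profile R n) (i : 'I_n) (k : nat) :
  incr_at e e' i -> (i < k)%N -> S R n e' k = S R n e k + (e' i - e i).
Proof.
move=> [_ eq] ik; rewrite /S (bigD1 i) // [in RHS](bigD1 i) //=.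
rewrite [X in _ = _ + X + _](eq_bigr (fun j => e' j)) => [|j /andP[_ ji]]; last by rewrite eq.
ring.
Qed.

Lemma S_incr_le (e e' : profile R n) (i : 'I_n) (k : nat) :
  incr_at e e' i -> (k <= i)%N -> S R n e' k = S R n e k.
Proof.
move=> [_ eq] ki; apply: eq_bigr => j jk; rewrite eq //.
by apply/eqP => ji; move: jk; rewrite ji ltnNge ki.
Qed.

Lemma incr_ne (e e' : profile R n) (i k : 'I_n) :
  incr_at e e' i -> (i < k)%N \/ (k < i)%N -> e' k = e k.
Proof.
move=> [_ eq] h; rewrite eq //; apply/eqP => ki; move: h; rewrite ki ltnn; by case.
Qed.

Lemma sum_lt1 (x : profile R n) (i0 : 'I_n) : val i0 = 0%N ->
  \sum_(i < n | (i < 1)%N) x i = x i0.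
Proof.
move=> v0; rewrite (bigD1 i0) ?v0 //= big1 ?addr0 // => j /andP[j1 ji0].
case/eqP: ji0; apply: val_inj; rewrite v0; move: j1; rewrite ltnS leqn0 => /eqP.
by [].
Qed.

End Back.

Theorem theorem5 (R : realType) (n : nat) (F : profile R n -> profile R n) :
  (2 <= n)%N -> is_rule F ->
  (scale_invariance F /\ downstream_impartiality F /\
   upstream_invariance F /\ equal_treatment_upstream F)
  <-> partial_compromise F.
Proof.
move=> n2 rule; have n0 : (0 < n)%N by apply: ltnW.
split.
- case=> [SI [DI [_ ET]]].
  pose i0 : 'I_n := Ordinal n0.
  pose i1 : 'I_n := Ordinal n2.
  pose c := cc R n F i1.
  have Hc : forall j : 'I_n, (0 < j)%N -> cc R n F j = c.
    move=> j j0.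
    have inc : incr_at (fun _ => 0) (unit0 R n) i0.
      split; first by rewrite /unit0 /= ltr01.
      move=> k ki0; rewrite /unit0; case: eqP => // k0.
      by case/eqP: ki0; apply: val_inj.
    have := DI (fun _ => 0) (unit0 R n) (fun _ => lexx 0) (unit0_inD R n) i0 inc j i1 j0 isT erefl.
    by rewrite !F0 // !subr0.
  have Hsum : forall i : 'I_n, \sum_(j < n | (i < j)%N) cc R n F j = (n - i.+1)%:R * c.
    move=> i; rewrite -count_gt_ord; apply: eq_bigr => j ij; apply: Hc.
    by apply: leq_ltn_trans ij.
  have HF : forall e, inD e -> forall i : 'I_n,
      F e i = (1 - (n - i.+1)%:R * c) * e i + c * S R n e i.
    move=> e De i; rewrite (@formula R n F n0 rule SI ET i e De) Hsum.
    have [i0'|ip] := posnP i; first by rewrite i0' !S0 !mulr0.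
    by rewrite Hc.
  have dn0 : (n.-1)%:R != 0 :> R by rewrite pnatr_eq0 -lt0n -subn1 subn_gt0.
  exists (1 - (n.-1)%:R * c); split.
    have H1 := HF _ (unit0_inD R n) i0.
    rewrite /= S0 mulr0 addr0 subn1 /unit0 /= mulr1 in H1.
    have [nn [_ pre]] := rule _ (unit0_inD R n).
    have := pre 0%N; rewrite !(@sum_lt1 R n _ i0) // H1 /unit0 /= => -> //; last first.
      by rewrite -subn1 ltn_subRL.
    by rewrite andbT -H1 nn.
  move=> e De i; rewrite HF // /R_NT /R_EPT -/(S R n e i).
  by field.
- case=> d [/andP[d0 d1] HF]; split; last split; last split.
  + move=> e De g g0; apply: boolp.funext => j /=.
    have De' : inD (fun j => g * e j) by move=> k; apply: mulr_ge0.
    rewrite !HF // /R_NT /R_EPT /= -mulr_sumr; ring.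
  + move=> e e' De De' i inc k l ik il ekl.
    rewrite !HF // /R_NT /R_EPT /= -/(S R n e' k) -/(S R n e k) -/(S R n e' l) -/(S R n e l).
    rewrite (@S_incr R n e e' i k inc ik) (@S_incr R n e e' i l inc il).
    rewrite (@incr_ne R n e e' i k inc (or_introl ik)) (@incr_ne R n e e' i l inc (or_introl il)).
    rewrite ekl; ring.
  + move=> e e' De De' i inc k ki.
    rewrite !HF // /R_NT /R_EPT /= -/(S R n e' k) -/(S R n e k).
    by rewrite (@S_incr_le R n e e' i k inc (ltnW ki)) (@incr_ne R n e e' i k inc (or_intror ki)).
  + move=> e e' De De' i ei Si.
    by rewrite !HF // /R_NT /R_EPT /= ei Si.
Qed.
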